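(* Let $G$ be a countable discrete group, $m$ a probability measure on $G$, $(X,\mu)$ a standard probability space, and $a,b \in \mathrm{Stat}(G,m,X,\mu)$. Then the following are equivalent. (i) $a \preceq b$. (ii) For every finite subset $F \subseteq G$, every $\epsilon > 0$ and every finite collection $A_1,\ldots,A_n$ of measurable subsets of $X$, there exist measurable subsets $B_1,\ldots,B_n$ of $X$ such that \[ \left| \mu(g^a A_i \cap h^a A_j) - \mu(g^b B_i \cap h^b B_j) \right| < \epsilon \] for all $g,h \in F$ and all $i,j \in \{1,\ldots,n\}$.
   Context: A measurable action $a$ of $G$ on $(X,\mu)$ is $m$-stationary if $\sum_{g\in G} m(g)\,\mu(g^aA)=\mu(A)$ for every measurable $A\subseteq X$, where $g^a$ denotes the (nonsingular) transformation of $X$ by which $g$ acts in $a$. $\mathrm{Stat}(G,m,X,\mu)$ is the set of $m$-stationary actions of $G$ on $(X,\mu)$. For $a,b\in\mathrm{Stat}(G,m,X,\mu)$, $a$ is weakly contained in $b$ ($a\preceq b$) if for every $\epsilon>0$, every finite $F\subseteq G$ and every finite collection $A_1,\ldots,A_n$ of measurable subsets of $X$ there are measurable $B_1,\ldots,B_n\subseteq X$ with $|\mu(g^aA_i\cap A_j)-\mu(g^bB_i\cap B_j)|<\epsilon$ for all $g\in F$ and $i,j\in\{1,\ldots,n\}$. *)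

(* Defs.v *)
From HB Require Import structures.
From mathcomp Require Import all_boot all_order all_algebra.
From mathcomp Require Import monoid.
From mathcomp Require Import all_classical all_reals all_analysis.
Set Implicit Arguments. Unset Strict Implicit. Unset Printing Implicit Defensive.
Import Order.TTheory GRing.Theory Num.Theory.
Local Open Scope classical_set_scope.
Local Open Scope ring_scope.

Section Defs.
Context (R : realType).

(* A standard Borel space: Borel-isomorphic to a Borel subset of the reals
   (Kuratowski); [f] is a measurable injection with measurable images
   (hence a Borel isomorphism onto its range, which is a Borel set). *)
Definition standard_borel d (X : measurableType d) : Prop :=
  exists f : X -> R,
    [/\ injective f, measurable (range f), measurable_fun setT f &
        forall A : set X, measurable A -> measurable (f @` A)].

Context (G : groupType).

Definition prob_on (m : G -> R) : Prop :=
  (forall g, 0 <= m g) /\ (\esum_(g in [set: G]) (m g)%:E = 1%E).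

Context d (X : measurableType d) (mu : probability X R).

(* measurable, nonsingular action of G on (X, mu); g^a = a g *)
Definition measurable_nonsingular_action (a : G -> X -> X) : Prop :=
  [/\ (forall x, a 1%g x = x),
      (forall g h x, a (g * h)%g x = a g (a h x)),
      (forall g, measurable_fun setT (a g)) &
      (forall g (A : set X), measurable A ->
         (mu A = 0%E <-> mu (a g @` A) = 0%E))].

Definition stationary (m : G -> R) (a : G -> X -> X) : Prop :=
  forall A : set X, measurable A ->
    (\esum_(g in [set: G]) ((m g)%:E * mu (a g @` A)))%E = mu A.

Definition Stat (m : G -> R) (a : G -> X -> X) : Prop :=
  measurable_nonsingular_action a /\ stationary m a.

Definition weakly_contained (a b : G -> X -> X) : Prop :=
  forall (eps : R), 0 < eps -> forall (F : set G), finite_set F ->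
  forall (n : nat) (A : 'I_n -> set X), (forall i, measurable (A i)) ->
  exists B : 'I_n -> set X, (forall i, measurable (B i)) /\
    forall g, F g -> forall i j : 'I_n,
      `| fine (mu (a g @` A i `&` A j)) - fine (mu (b g @` B i `&` B j)) | < eps.

Definition weakly_contained2 (a b : G -> X -> X) : Prop :=
  forall (F : set G), finite_set F -> forall (eps : R), 0 < eps ->
  forall (n : nat) (A : 'I_n -> set X), (forall i, measurable (A i)) ->
  exists B : 'I_n -> set X, (forall i, measurable (B i)) /\
    forall g h, F g -> F h -> forall i j : 'I_n,
      `| fine (mu (a g @` A i `&` a h @` A j))
         - fine (mu (b g @` B i `&` b h @` B j)) | < eps.

End Defs.

(* Main.v *)
Require Import Defs.
From HB Require Import structures.
From mathcomp Require Import all_boot all_order all_algebra.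
From mathcomp Require Import monoid.
From mathcomp Require Import all_classical all_reals all_analysis.
From mathcomp Require Import lra.
From mathcomp Require finmap.
From mathcomp Require Import zify.

Set Implicit Arguments. Unset Strict Implicit.
Import Order.TTheory GRing.Theory Num.Theory.

Section Aux.
Local Open Scope classical_set_scope.
Local Open Scope ring_scope.
Context (R : realType) (G : groupType) (d : measure_display)
  (X : measurableType d) (mu : probability X R).

Lemma img_pre (a : G -> X -> X) :
  (forall x, a 1%g x = x) -> (forall g h x, a (g * h)%g x = a g (a h x)) ->
  forall g (A : set X), a g @` A = a (g^-1)%g @^-1` A.
Proof.
move=> a1 aM g A; apply/seteqP; split => x /=.
  by case=> y Ay <-; rewrite -aM mulVg a1.
by move=> Ax; exists (a (g^-1)%g x) => //; rewrite -aM mulgV a1.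
Qed.

Lemma img1 (a : G -> X -> X) : (forall x, a 1%g x = x) ->
  forall (A : set X), a 1%g @` A = A.
Proof.
move=> a1 A; apply/seteqP; split => x /=.
  by case=> y Ay <-; rewrite a1.
by move=> Ax; exists x => //; rewrite a1.
Qed.

Lemma img_meas (a : G -> X -> X) :
  (forall x, a 1%g x = x) -> (forall g h x, a (g * h)%g x = a g (a h x)) ->
  (forall g, measurable_fun setT (a g)) ->
  forall g (A : set X), measurable A -> measurable (a g @` A).
Proof.
move=> a1 aM ma g A mA; rewrite (img_pre a1 aM).
by have := ma (g^-1)%g measurableT A mA; rewrite setTI.
Qed.

Definition mr (S : set X) : R := fine (mu S).

Lemma mr_ge0 S : 0 <= mr S.
Proof. exact/fine_ge0/measure_ge0. Qed.

Lemma mrT : mr setT = 1.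
Proof. by rewrite /mr probability_setT. Qed.

Lemma mr_split S T : measurable S -> measurable T ->
  mr S = mr (S `&` T) + mr (S `&` ~` T).
Proof.
move=> mS mT; rewrite /mr (measureDI mu mS mT) fineD ?fin_num_measure //.
- by rewrite addrC setDE.
- exact: measurableD.
- exact: measurableI.
Qed.

Lemma mr_leI S T : measurable S -> measurable T -> mr (S `&` T) <= mr S.
Proof.
move=> mS mT; rewrite (mr_split mS mT); have := mr_ge0 (S `&` ~` T); lra.
Qed.

Lemma mrC T : measurable T -> mr (~` T) = 1 - mr T.
Proof.
move=> mT; have := mr_split measurableT mT; rewrite !setTI mrT; lra.
Qed.

Lemma mrL1 S U V : measurable S -> measurable U -> measurable V ->
  mr (S `&` U) - mr (S `&` V) <= mr (U `&` ~` V).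
Proof.
move=> mS mU mV.
have := mr_split (measurableI _ _ mS mU) mV.
have -> : S `&` U `&` ~` V = (U `&` ~` V) `&` S.
  by apply/seteqP; split => x /=; tauto.
have -> : S `&` U `&` V = (S `&` V) `&` U.
  by apply/seteqP; split => x /=; tauto.
have := mr_leI (measurableI _ _ mU (measurableC mV)) mS.
have := mr_leI (measurableI _ _ mS mV) mU.
lra.
Qed.

End Aux.

Lemma enum_fin (G : groupType) (F : set G) : finite_set F ->
  exists (k : nat) (f : nat -> G), forall g, F g -> exists2 q, (q < k)%N & f q = g.
Proof.
case/finite_fsetP => Y ->.
exists (size (finmap.enum_fset Y)), (nth 1%g (finmap.enum_fset Y)) => g /= Yg.
exists (index g (finmap.enum_fset Y)); first by rewrite index_mem.
by rewrite nth_index.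
Qed.

Local Open Scope classical_set_scope.
Local Open Scope ring_scope.

Theorem mainTheorem1 (R : realType) (G : groupType) (m : G -> R)
  (d : measure_display) (X : measurableType d) (mu : probability X R)
  (a b : G -> X -> X) :
  countable [set: G] ->
  prob_on m ->
  standard_borel R X ->
  Stat mu m a -> Stat mu m b ->
  (weakly_contained mu a b <-> weakly_contained2 mu a b).
Proof.
move=> _ _ _ [[a1 aM ma _] _] [[b1 bM mb _] _]; split; last first.
  move=> wc2 eps eps0 F fF n A mA.
  have fF' : finite_set (F `|` [set 1%g]) by rewrite finite_setU; split => //; exact: finite_set1.
  have [B [mB HB]] := wc2 _ fF' eps eps0 n A mA.
  exists B; split => // g Fg i j.
  have := HB g 1%g (or_introl Fg) (or_intror erefl) i j.
  by rewrite (img1 a1) (img1 b1).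
move=> wc F fF eps eps0 n A mA.
have fF' : finite_set (F `|` [set 1%g]) by rewrite finite_setU; split => //; exact: finite_set1.
have [k [f Hf]] := enum_fin fF.
pose Anat (p : nat) : set X := (fun o : option 'I_n => oapp A set0 o) (insub p).
have mAnat p : measurable (Anat p).
  by rewrite /Anat; case: (insub p) => [i|] /=; [exact: mA | exact: measurable0].
have AnatE (i : 'I_n) : Anat i = A i by rewrite /Anat valK.
pose E (p : nat) : set X := if (p < n)%N then Anat p
  else if (p < n + k * n)%N then a (f ((p - n) %/ n)%N) @` Anat ((p - n) %% n)%N
  else setT.
have mE p : measurable (E p).
  rewrite /E; case: ifP => _; first exact: mAnat.
  case: ifP => _; last exact: measurableT.
  exact: img_meas.
have EA (i : 'I_n) : E i = A i by rewrite /E ltn_ord AnatE.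
have EC q (j : 'I_n) : (q < k)%N -> E (n + q * n + j)%N = a (f q) @` A j.
  move=> qk; have jn := ltn_ord j; rewrite /E.
  have -> : (n + q * n + j < n)%N = false by lia.
  have -> : (n + q * n + j < n + k * n)%N = true by nia.
  have e : (n + q * n + j - n = q * n + j)%N by lia.
  have n0 : (0 < n)%N by lia.
  rewrite e divnMDl // divn_small // addn0 modnMDl modn_small //.
  by rewrite AnatE.
have EX : E (n + k * n)%N = setT.
  rewrite /E; have -> : (n + k * n < n)%N = false by lia.
  by rewrite ltnn.
pose N := (n + k * n + 1)%N.
have iaP (i : 'I_n) : (i < N)%N by have := ltn_ord i; rewrite /N; lia.
pose ia (i : 'I_n) : 'I_N := Ordinal (iaP i).
have icP q j : (q < k)%N -> (j < n)%N -> (n + q * n + j < N)%N.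
  by move=> qk jn; rewrite /N; nia.
have iXP : (n + k * n < N)%N by rewrite /N; lia.
pose iX : 'I_N := Ordinal iXP.
have := wc (eps / 4) _ _ fF' N (fun i => E (val i)) (fun i => mE _).
case; first by rewrite divr_gt0.
move=> B' [mB' H].
exists (fun i => B' (ia i)); split; first by move=> i; exact: mB'.
move=> g h Fg Fh i j.
have [q qk fqh] := Hf h Fh.
pose ic : 'I_N := Ordinal (icP q j qk (ltn_ord j)).
have F'g : (F `|` [set 1%g]) g by left.
have F'h : (F `|` [set 1%g]) h by left.
have F'1 : (F `|` [set 1%g]) 1%g by right.
have w1 := H g F'g (ia i) ic.
have w2 := H 1%g F'1 ic ic.
have w3 := H h F'h (ia j) ic.
have w4 := H h F'h (ia j) iX.
have w5 := H 1%g F'1 iX iX.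
rewrite /= EA EC // ?fqh in w1.
rewrite /= EC // ?fqh (img1 a1) (img1 b1) !setIid in w2.
rewrite /= EA EC // ?fqh setIid in w3.
rewrite /= EA EX setIT in w4.
rewrite /= EX (img1 a1) (img1 b1) !setIid in w5.
set P := b g @` B' (ia i).
set Hs := b h @` B' (ia j).
set D := B' ic.
set BX := B' iX.
have mP : measurable P by exact: img_meas.
have mHs : measurable Hs by exact: img_meas.
have mD : measurable D by exact: mB'.
have mBX : measurable BX by exact: mB'.
have l1 := mrL1 mu mP mD mHs.
have l2 := mrL1 mu mP mHs mD.
have s1 := mr_split mu mD mHs.
have s2 := mr_split mu mHs mD.
have s3 := mr_split mu mHs mBX.
have s4 : mr mu (Hs `&` ~` BX) <= mr mu (~` BX).
  by rewrite setIC; apply: mr_leI => //; exact: measurableC.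
have s5 := mrC mu mBX.
rewrite setIC in s1.
rewrite probability_setT in w5.
rewrite /mr in l1 l2 s1 s2 s3 s4 s5.
move: w1 w2 w3 w4 w5; rewrite !ltr_norml /=.
move=> /andP[w1 w1'] /andP[w2 w2'] /andP[w3 w3'] /andP[w4 w4'] /andP[w5 w5'].
apply/andP; split; lra.
Qed.
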